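(* Let $T$ be a quasi-binary tree with $|V(T)|>1$ and vertex weight function $\omega:V(T)\to\mathbb{R}$. Let $\gamma\in\mathbb{R}$ with $\gamma\ge\omega_3$. If $$\omega(T)\ge\max\left\{\frac{3\omega_1-\gamma}{2},\ 3\omega_2-2\gamma\right\},$$ then $$\beta_2(T)\ge\frac{\omega(T)-\gamma}{3}\quad\text{and}\quad \alpha_2(T)\le\frac{2\omega(T)+\gamma}{3}.$$
   Context: A binary tree is a tree in which every vertex has degree $3$, except for pending vertices (degree $1$) and one root vertex (degree $2$). A tree is quasi-binary if it is a connected subgraph of a binary tree; in particular every vertex has degree $1$, $2$ or $3$. For a subgraph $H$ write $\omega(H)=\sum_{v\in V(H)}\omega(v)$. For $i=1,2,3$ let $V_i$ be the set of vertices of degree $i$, and let $\omega_i=\max\{\omega(v): v\in V_j \text{ for some } j \text{ with } i\le j\le 3\}$ (the maximum weight of a vertex of degree at least $i$). For an edge $e$, let $C^1_e, C^2_e$ be the two components of $T\setminus\{e\}$. Define $\alpha_2(T)=\min_{e\in E(T)}\max\{\omega(C^1_e),\omega(C^2_e)\}$ and $\beta_2(T)=\max_{e\in E(T)}\min\{\omega(C^1_e),\omega(C^2_e)\}$. *)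

(* Defs.v *)
From HB Require Import structures.
From mathcomp Require Import all_boot all_order all_algebra.
Set Implicit Arguments. Unset Strict Implicit. Unset Printing Implicit Defensive.
Import Order.TTheory GRing.Theory Num.Theory.
Local Open Scope ring_scope.

Definition simple_graph (V : finType) (e : rel V) : Prop :=
  symmetric e /\ irreflexive e.

Definition deg (V : finType) (e : rel V) (x : V) : nat := #|[set y | e x y]|.

Definition del_edge (V : finType) (e : rel V) (x y : V) : rel V :=
  fun a b => e a b && ~~ (((a == x) && (b == y)) || ((a == y) && (b == x))).

(* A tree: connected simple graph in which every edge is a bridge
   (i.e. a minimally connected graph, equivalently connected and acyclic). *)
Definition is_tree (V : finType) (e : rel V) : Prop :=
  [/\ simple_graph e,
      (forall x y : V, connect e x y) &
      (forall x y : V, e x y -> ~~ connect (del_edge e x y) x y)].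

Definition is_binary_tree (V : finType) (e : rel V) : Prop :=
  is_tree e /\
  exists r : V, deg e r = 2%N /\
    forall v : V, v != r -> (deg e v = 1%N \/ deg e v = 3%N).

Definition quasi_binary (V : finType) (e : rel V) : Prop :=
  is_tree e /\
  exists (U : finType) (f : rel U) (phi : V -> U),
    [/\ is_binary_tree f, injective phi &
        forall x y : V, e x y -> f (phi x) (phi y)].

Section Weights.
Variables (R : realFieldType) (V : finType) (e : rel V) (w : V -> R).

Definition wsum (A : pred V) : R := \sum_(v | A v) w v.

Definition wT : R := wsum predT.

Definition comp_w (x y : V) : R := wsum (connect (del_edge e x y) x).

Definition edge_seq : seq (V * V) := enum [pred p : V * V | e p.1 p.2].

Definition seq_min (s : seq R) : R := \big[Num.min/head 0 s]_(r <- s) r.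
Definition seq_max (s : seq R) : R := \big[Num.max/head 0 s]_(r <- s) r.

Definition alpha2 : R :=
  seq_min [seq Num.max (comp_w p.1 p.2) (comp_w p.2 p.1) | p <- edge_seq].

Definition beta2 : R :=
  seq_max [seq Num.min (comp_w p.1 p.2) (comp_w p.2 p.1) | p <- edge_seq].

(* omega_i = max weight of a vertex of degree >= i; None if there is no
   such vertex (max of the empty set, treated as -infinity). *)
Definition omega_i (i : nat) : option R :=
  let s := [seq w v | v <- enum [pred v | (i <= deg e v)%N]] in
  if s is r :: _ then Some (seq_max s) else None.

End Weights.

Definition opt_le (R : realFieldType) (o : option R) (c : R) : Prop :=
  if o is Some m then m <= c else True.

(* Main.v *)
Require Import Defs.
From HB Require Import structures.
From mathcomp Require Import all_boot all_order all_algebra.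
From mathcomp Require Import lra.
Import Order.TTheory GRing.Theory Num.Theory.
Local Open Scope ring_scope.
Set Implicit Arguments. Unset Strict Implicit.

Lemma conn_ind (T : finType) (r : rel T) (P : pred T) x z :
  P x -> (forall a b, P a -> r a b -> P b) -> connect r x z -> P z.
Proof.
move=> Px H /connectP [p]; elim: p x Px => [|b p IH] x Px /=; first by move=> _ ->.
by case/andP=> rxb pth zl; apply: (IH b (H _ _ Px rxb) pth zl).
Qed.

Section Tree.
Variables (V : finType) (e : rel V).
Hypothesis se : symmetric e.
Hypothesis ie : irreflexive e.
Hypothesis bridge : forall x y, e x y -> ~~ connect (del_edge e x y) x y.

Definition B (v u : V) : pred V := connect (del_edge e v u) u.

Lemma del_sym x y : symmetric (del_edge e x y).
Proof.
by move=> a b; rewrite /del_edge se [(b == x) && _]andbC [(b == y) && _]andbC orbC.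
Qed.

Lemma del_swap x y : del_edge e x y =2 del_edge e y x.
Proof. by move=> a b; rewrite /del_edge orbC. Qed.

Lemma connD_sym x y : connect_sym (del_edge e x y).
Proof. exact: sym_connect_sym (del_sym x y). Qed.

Lemma B_nv v u : e v u -> ~~ B v u v.
Proof. by move=> evu; rewrite /B connD_sym; apply: bridge. Qed.

Lemma B_self v u : B v u u.
Proof. exact: connect0. Qed.

Hypothesis conn : forall x y, connect e x y.

Lemma B_cover v z : z != v -> exists2 u, e v u & B v u z.
Proof.
move=> zv.
have: (z == v) || [exists u, e v u && B v u z].
  apply: (@conn_ind _ _ (fun a => (a == v) || [exists u, e v u && B v u a])) (conn v z).
    by rewrite eqxx.
  move=> a b Pa eab; case: (eqVneq b v) => [->|bv] //.
  apply/orP; right; case/orP: Pa => [/eqP av|/existsP [u /andP [evu Bua]]].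
    by apply/existsP; exists b; rewrite -av eab B_self.
  apply/existsP; exists u; rewrite evu /=.
  have av : a != v by apply/eqP => av; move: Bua; rewrite av (negbTE (B_nv evu)).
  apply: connect_trans Bua (connect1 _).
  by rewrite /del_edge eab (negbTE av) (negbTE bv) /= andbF.
rewrite (negbTE zv) /= => /existsP [u /andP [evu Buz]]; by exists u.
Qed.

Lemma B_uniq v u1 u2 z : e v u1 -> e v u2 -> B v u1 z -> B v u2 z -> u1 = u2.
Proof.
move=> e1 e2 B1 B2; apply/eqP; apply/negP => /negP u12.
have: B v u2 z && connect (del_edge e v u1) u2 z.
  apply: (@conn_ind _ _ (fun a => B v u2 a && connect (del_edge e v u1) u2 a)) B2.
    by rewrite B_self connect0.
  move=> a b /andP [Ba Ca] Dab; have Bb : B v u2 b := connect_trans Ba (connect1 Dab).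
  rewrite Bb /=; apply: connect_trans Ca (connect1 _).
  have av : a != v by apply/eqP => av; move: Ba; rewrite av (negbTE (B_nv e2)).
  have bv : b != v by apply/eqP => bv; move: Bb; rewrite bv (negbTE (B_nv e2)).
  move: Dab; rewrite /del_edge => /andP [-> _].
  by rewrite (negbTE av) (negbTE bv) /= andbF.
case/andP=> _ C2.
have C12 : connect (del_edge e v u1) u1 u2.
  by apply: connect_trans B1 _; rewrite connD_sym.
have : B v u1 v.
  apply: connect_trans C12 (connect1 _).
  rewrite /del_edge se e2 /=.
  have u2v : u2 != v by apply/eqP => uv; move: (B_nv e2); rewrite /B {2}uv connect0.
  by rewrite (negbTE u2v) [u2 == u1]eq_sym (negbTE u12).
by move=> H; move: (B_nv e1); rewrite H.
Qed.

Lemma B_edge x y z : e x y -> B x y z = ~~ B y x z.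
Proof.
move=> exy.
have eqc : B y x =1 connect (del_edge e x y) x.
  by move=> a; rewrite /B (eq_connect (del_swap y x)).
rewrite eqc; apply/idP/idP.
  move=> Byz; apply/negP => Bxz; move: (bridge exy); rewrite /=.
  apply/negP/negPn; apply: connect_trans Bxz _; by rewrite connD_sym.
move=> nB.
have: connect (del_edge e x y) x z || B x y z.
  apply: (@conn_ind _ _ (fun a => connect (del_edge e x y) x a || B x y a)) (conn x z).
    by rewrite connect0.
  move=> a b Pa eab.
  case Dab: (del_edge e x y a b).
    by case/orP: Pa => H; [rewrite (connect_trans H (connect1 Dab)) | rewrite /B (connect_trans H (connect1 Dab)) orbT].
  move: Dab; rewrite /del_edge eab /= => /negbFE /orP [] /andP [_ /eqP ->].
    by rewrite B_self orbT.
  by rewrite connect0.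
by rewrite (negbTE nB).
Qed.

Lemma B_nest x y u z : e x y -> e y u -> u != x -> B y u z -> B x y z.
Proof.
move=> exy eyu ux Bz; rewrite (B_edge z exy); apply/negP => Bz'.
by move: ux; rewrite (B_uniq eyu _ Bz Bz') ?eqxx // se.
Qed.


Lemma seq_max_ge (R : realFieldType) (s : seq R) z : z \in s -> z <= seq_max s.
Proof. by move=> H; rewrite /seq_max; exact: (@le_bigmax_seq _ _ R s (head 0 s) z xpredT id H). Qed.

Lemma seq_min_le (R : realFieldType) (s : seq R) z : z \in s -> seq_min s <= z.
Proof. by move=> H; rewrite /seq_min; exact: (@ge_bigmin_seq _ _ R s (head 0 s) z xpredT id H). Qed.

Variables (R : realFieldType) (w : V -> R).

Lemma sum_vertex v : wT w = w v + \sum_(u in [set y | e v y]) wsum w (B v u).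
Proof.
rewrite /wT /wsum (bigD1 v) //=; congr (_ + _).
symmetry; rewrite (exchange_big_dep (fun z => z != v)) /=; last first.
  move=> u z; rewrite inE => evu Bz; apply/eqP => zv; move: Bz.
  by rewrite zv (negbTE (B_nv evu)).
apply: eq_bigr => z zv; have [u0 eu0 Bu0] := B_cover zv.
rewrite (big_pred1 u0) // => u; rewrite inE /=; apply/idP/eqP.
  by case/andP=> evu Bu; apply: B_uniq evu eu0 Bu Bu0.
by move=> ->; rewrite eu0 Bu0.
Qed.

Lemma sum_edge x y : e x y -> wT w = wsum w (B x y) + wsum w (B y x).
Proof.
move=> exy; rewrite /wT /wsum (bigID (B x y)) /=; congr (_ + _).
by apply: eq_bigl => z /=; rewrite (B_edge z exy) negbK.
Qed.

Lemma compB x y : comp_w e w x y = wsum w (B y x).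
Proof. by apply: eq_bigl => z; rewrite /B (eq_connect (del_swap y x)). Qed.

Lemma light_exists (th : R) :
  (forall x y, e x y -> th <= wsum w (B x y) -> wsum w (B y x) < th) ->
  forall v0 : V, exists v, forall u, e v u -> wsum w (B v u) < th.
Proof.
move=> ng v0.
case: (pickP [pred p : V * V | e p.1 p.2 && (th <= wsum w (B p.1 p.2))])
  => [[x y] /andP [/= exy hxy] | none]; last first.
  exists v0 => u evu; rewrite ltNge; apply/negP => h; move: (none (v0,u)).
  by rewrite /= evu h.
suff: forall n x y, (#|B x y| <= n)%N -> e x y -> th <= wsum w (B x y) ->
    exists v, forall u, e v u -> wsum w (B v u) < th.
  by move/(_ _ x y (leqnn _) exy hxy).
elim=> [|n IH] {x y exy hxy} x y hc exy hxy.
  have : (0 < #|B x y|)%N.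
    apply/card_gt0P; exists y; exact: B_self.
  by move=> h; move: (leq_trans h hc).
case: (pickP [pred u | e y u && (th <= wsum w (B y u))]) => [u /andP [eyu hyu] | none2].
  have ux : u != x.
    by apply/eqP => ux; move: (ng x y exy hxy); rewrite -ux ltNge hyu.
  apply: (IH y u) => //; rewrite -ltnS; apply: leq_trans hc; apply: proper_card.
  apply/properP; split.
    by apply/subsetP => z; rewrite !unfold_in; apply: B_nest.
  exists y; first exact: B_self. exact: (B_nv eyu).
exists y => u eyu; rewrite ltNge; apply/negP => h; move: (none2 u).
by rewrite /= eyu h.
Qed.

End Tree.

Theorem lemma2 (R : realFieldType) (V : finType) (e : rel V) (w : V -> R)
    (gamma : R) :
  quasi_binary e ->
  (1 < #|V|)%N ->
  opt_le (omega_i e w 3) gamma ->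
  opt_le (omap (fun m => (3 * m - gamma) / 2) (omega_i e w 1)) (wT w) ->
  opt_le (omap (fun m => 3 * m - 2 * gamma) (omega_i e w 2)) (wT w) ->
  (wT w - gamma) / 3 <= beta2 e w /\ alpha2 e w <= (2 * wT w + gamma) / 3.
Proof.
move=> [[[se ie] conn bridge] [U [f [phi [[_ [r [fr fo]]] injphi hom]]]]] n1 h3 h1 h2.
have deg3 : forall v, (deg e v <= 3)%N.
  move=> v; apply: (@leq_trans (deg f (phi v))).
    rewrite /deg -(card_imset _ injphi); apply: subset_leq_card.
    by apply/subsetP => z /imsetP [y]; rewrite inE => evy ->; rewrite inE; exact: hom.
  case: (eqVneq (phi v) r) => [->|nr]; first by rewrite fr.
  by case: (fo _ nr) => ->.
have omega_ge : forall i v, (i <= deg e v)%N ->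
    exists m, omega_i e w i = Some m /\ w v <= m.
  move=> i v hi; rewrite /omega_i /=.
  have Hin : w v \in [seq w v | v <- enum [pred v | (i <= deg e v)%N]].
    by apply: map_f; rewrite mem_enum.
  move: Hin; case: [seq _ | _ <- _] => // a s Hin.
  by exists (seq_max (a :: s)); split => //; exact: seq_max_ge.
set W := wT w. set th := (W - gamma) / 3.
case: (pickP [pred p : V * V | [&& e p.1 p.2, th <= wsum w (B e p.1 p.2)
                                 & th <= wsum w (B e p.2 p.1)]])
  => [[x y] /= /and3P [exy hxy hyx] | none].
  have sW := sum_edge se bridge conn w exy.
  have inE' : (x, y) \in edge_seq e by rewrite /edge_seq mem_enum.
  split.
    have Hb := seq_max_ge (map_f (fun p : V * V =>
       Num.min (comp_w e w p.1 p.2) (comp_w e w p.2 p.1)) inE').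
    apply: le_trans Hb; rewrite /= !compB le_min hxy hyx //.
  have Ha := seq_min_le (map_f (fun p : V * V =>
       Num.max (comp_w e w p.1 p.2) (comp_w e w p.2 p.1)) inE').
  apply: le_trans Ha _; rewrite /= !compB ge_max; apply/andP; split.
    by move: hxy hyx sW; rewrite /th /W; lra.
  by move: hxy hyx sW; rewrite /th /W; lra.
exfalso.
have ng : forall x y, e x y -> th <= wsum w (B e x y) -> wsum w (B e y x) < th.
  move=> x y exy hxy; rewrite ltNge; apply/negP => h; move: (none (x,y)).
  by rewrite /= exy hxy h.
move/card_gt1P: n1 => [x0 [y0 [_ _ xy0]]].
have [v light] := light_exists se bridge conn ng x0.
have [z zv] : exists z, z != v.
  by case: (eqVneq x0 v) => [<-|h]; [exists y0; rewrite eq_sym | exists x0].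
have [u0 eu0 _] := B_cover se bridge conn zv.
have hsum := sum_vertex se bridge conn w v.
have hlt : \sum_(u in [set y | e v y]) wsum w (B e v u) < th *+ deg e v.
  rewrite /deg -sumr_const; apply: ltr_sum.
    by apply/hasP; exists u0; [exact: mem_index_enum | rewrite inE].
  by move=> u; rewrite inE; exact: light.
have d1 : (1 <= deg e v)%N by rewrite /deg; apply/card_gt0P; exists u0; rewrite inE.
have [m1 [E1 le1]] := omega_ge 1%N v d1; rewrite E1 /= in h1.
move: hlt hsum.
set S := \sum_(u in _) _.
case Ed: (deg e v) d1 (deg3 v) => [|[|[|[|d]]]] //= _ _.
- rewrite mulr1n => hlt hsum; move: h1 le1; rewrite /th /W in hlt *; lra.
- have [m2 [E2 le2]] := omega_ge 2%N v ltac:(by rewrite Ed); rewrite E2 /= in h2.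
  rewrite mulrS mulr1n => hlt hsum; move: h2 le2; rewrite /th /W in hlt *; lra.
- have [m3 [E3 le3]] := omega_ge 3%N v ltac:(by rewrite Ed); rewrite E3 /= in h3.
  rewrite 2!mulrS mulr1n => hlt hsum; move: h3 le3 hlt hsum; rewrite /th /W; clear; move=> h3 le3 hlt hsum; lra.
Qed.
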